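(* Let $m\ge 1$ be an integer and let $(h(n))_{n\ge 1}$ be the non-decreasing sequence of non-negative integers with $h(1)=0$ in which, for each integer $k\ge 0$, the value $k$ appears exactly $mk+1$ times. For $k\ge 0$ let $T^{\star}_k = 1 + m\binom{k}{2} + k$ (so $h(n)=k$ if and only if $T^{\star}_k\le n<T^{\star}_{k+1}$), and let $a_{\mathrm{sol}}(n) = n - h(n)$ for $n\ge1$. Then: (1) For every $k\ge 0$: $h\big(a_{\mathrm{sol}}^{(j)}(T^{\star}_{k+1}-1)\big) = k$ for all $0\le j\le m$, and $a_{\mathrm{sol}}^{(m)}(T^{\star}_{k+1}-1) = T^{\star}_k$. (2) For every $k\ge 1$: $h\big(a_{\mathrm{sol}}^{(j)}(T^{\star}_{k})\big) = k-1$ for all $1\le j\le m$, and $a_{\mathrm{sol}}^{(m)}(T^{\star}_{k}) = T^{\star}_{k-1}$.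
   Context: Iterates are defined by $f^{(0)}(n)=n$ and $f^{(j+1)}(n)=f(f^{(j)}(n))$. *)

(* Defs.v *)
From mathcomp Require Import all_boot.
Set Implicit Arguments. Unset Strict Implicit. Unset Printing Implicit Defensive.

Definition hseq (m N : nat) : seq nat :=
  flatten [seq nseq (m * k + 1) k | k <- iota 0 N].

(* The first n blocks already
   have total length >= n, so index n-1 is within range. *)
Definition h (m n : nat) : nat := nth 0 (hseq m n) n.-1.

Definition Tstar (m k : nat) : nat := 1 + m * 'C(k, 2) + k.

Definition asol (m n : nat) : nat := n - h m n.

(* Main.v *)
Require Import Defs.
From mathcomp Require Import all_boot.
From mathcomp Require Import zify.

Lemma hseqS m k : hseq m k.+1 = hseq m k ++ nseq (m*k+1) k.
Proof. by rewrite /hseq -[k.+1]addn1 iotaD map_cat flatten_cat /= cats0 add0n. Qed.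

Lemma size_hseq m k : size (hseq m k) = m * 'C(k,2) + k.
Proof.
elim: k => [|k IH]; first by rewrite bin0n muln0.
rewrite hseqS size_cat size_nseq IH binS bin1 mulnDr; lia.
Qed.

Lemma hseq_prefix m k N : k < N -> exists s, hseq m N = hseq m k.+1 ++ s.
Proof.
elim: N => [//|N IH]; rewrite ltnS leq_eqVlt => /orP [/eqP ->|/IH [s Hs]].
  by exists [::]; rewrite cats0.
by exists (s ++ nseq (m*N+1) N); rewrite hseqS Hs catA.
Qed.

Lemma TS m k : Tstar m k.+1 = Tstar m k + m*k + 1.
Proof. rewrite /Tstar binS bin1 mulnDr; lia. Qed.

Lemma hE m n k : Tstar m k <= n < Tstar m k.+1 -> h m n = k.
Proof.
move=> /andP [H1 H2].
have Hk : k < n by move: H1; rewrite /Tstar; lia.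
have [s Hs] := @hseq_prefix m k n Hk.
rewrite /h Hs hseqS -catA nth_cat size_hseq.
have -> : (n.-1 < m * 'C(k, 2) + k) = false by move: H1; rewrite /Tstar; lia.
have H3 : (n.-1 - (m * 'C(k, 2) + k) < m * k + 1) = true.
  by move: H1 H2; rewrite TS /Tstar; lia.
by rewrite nth_cat size_nseq H3 nth_nseq H3.
Qed.

Lemma part1 m k j : j <= m ->
  iter j (asol m) (Tstar m k.+1 - 1) = Tstar m k.+1 - 1 - j * k.
Proof.
elim: j => [|j IH] Hj; first by rewrite mul0n subn0.
rewrite iterS IH ?(ltnW Hj) // /asol (@hE _ _ k).
  by rewrite mulSn; lia.
have : j * k <= m * k by apply: leq_mul => //; apply: ltnW.
rewrite TS; have := TS m k; lia.
Qed.

Theorem mainTheorem3 (m : nat) (hm : 1 <= m) :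
  (forall k : nat,
      (forall j : nat, j <= m ->
         h m (iter j (asol m) (Tstar m k.+1 - 1)) = k)
      /\ iter m (asol m) (Tstar m k.+1 - 1) = Tstar m k)
  /\
  (forall k : nat, 1 <= k ->
      (forall j : nat, 1 <= j <= m ->
         h m (iter j (asol m) (Tstar m k)) = k.-1)
      /\ iter m (asol m) (Tstar m k) = Tstar m k.-1).
Proof.
have P1 : forall k : nat,
      (forall j : nat, j <= m ->
         h m (iter j (asol m) (Tstar m k.+1 - 1)) = k)
      /\ iter m (asol m) (Tstar m k.+1 - 1) = Tstar m k.
  move=> k; split.
    move=> j Hj; rewrite part1 //; apply: hE.
    have : j * k <= m * k by apply: leq_mul.
    rewrite TS; have := TS m k; lia.
  rewrite part1 // TS; lia.
split=> //.
case=> [//|k] _.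
have E : forall j, iter j.+1 (asol m) (Tstar m k.+1) =
                   iter j.+1 (asol m) (Tstar m k.+1 - 1).
  move=> j; rewrite !iterSr; congr iter.
  rewrite /asol (@hE _ (Tstar m k.+1) k.+1); last by rewrite !TS; lia.
  rewrite (@hE _ _ k); last by rewrite TS; have := TS m k; lia.
  rewrite TS; lia.
split.
  by case=> [//|j] /andP [_ Hj]; rewrite E; apply P1.
by case: m hm P1 E => [//|m'] _ P1 E; rewrite E; apply P1.
Qed.
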